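(* Let $\lambda\in\mathbb{R}$, let $r\ge0$ be an integer and let $z\in\mathbb{C}$. Then, as formal power series in $t$, \[ \sum_{n=0}^{\infty}\phi_{n,\lambda}^{(r)}(|z|^2)\frac{t^n}{n!}=\langle z|\,e_\lambda^{a^{\dagger}a+r}(t)\,|z\rangle=e_\lambda^{r}(t)\,e^{|z|^2(e_\lambda(t)-1)}. \]
   Context: Notation: $(x)_0=1$, $(x)_m=x(x-1)\cdots(x-m+1)$; $(y)_{0,\lambda}=1$, $(y)_{n,\lambda}=y(y-\lambda)\cdots(y-(n-1)\lambda)$ (also for operators $y$). The degenerate exponential is $e_\lambda^{x}(t)=\sum_{k\ge0}(x)_{k,\lambda}\frac{t^k}{k!}$ (i.e. $(1+\lambda t)^{x/\lambda}$), $e_\lambda(t)=e_\lambda^1(t)$, and for an operator $X$, $e_\lambda^{X}(t)=\sum_{n\ge0}(X)_{n,\lambda}\frac{t^n}{n!}$. The degenerate $r$-Stirling numbers of the second kind ${n+r\brace k+r}_{r,\lambda}$ are defined by $(x+r)_{n,\lambda}=\sum_{k=0}^{n}{n+r\brace k+r}_{r,\lambda}(x)_k$ ($n\ge0$), and the degenerate $r$-Bell polynomials are $\phi_{n,\lambda}^{(r)}(x)=\sum_{k=0}^{n}{n+r\brace k+r}_{r,\lambda}x^k$. The boson operators $a,a^{\dagger}$ satisfy $[a,a^{\dagger}]=1$ and act on orthonormal number states $|m\rangle$ by $a|m\rangle=\sqrt{m}|m-1\rangle$, $a^{\dagger}|m\rangle=\sqrt{m+1}|m+1\rangle$; the coherent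 state is $|z\rangle=e^{-|z|^2/2}\sum_{n\ge0}\frac{z^n}{\sqrt{n!}}|n\rangle$, with $a|z\rangle=z|z\rangle$, $\langle z|z\rangle=1$. *)

(* Defs.v *)
From HB Require Import structures.
From mathcomp Require Import all_boot all_order all_algebra.
From mathcomp Require Import complex.
From mathcomp Require Import all_classical all_reals all_analysis.
Set Implicit Arguments. Unset Strict Implicit. Unset Printing Implicit Defensive.
Import Order.TTheory GRing.Theory Num.Theory ComplexField ComplexField.Normc.
Import numFieldNormedType.Exports.
Local Open Scope ring_scope.
Local Open Scope complex_scope.

Section Defs.
Variable R : realType.

Definition ffact (x : R) (m : nat) : R := \prod_(i < m) (x - i%:R).

Definition dfact (lam y : R) (n : nat) : R := \prod_(i < n) (y - i%:R * lam).

(* S is the family of degenerate r-Stirling numbers of the second kind: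
   S n k = {n+r brace k+r}_{r,lambda}, defined by
   (x+r)_{n,lambda} = sum_{k=0}^n S n k (x)_k for all n. *)
Definition is_deg_r_Stirling2 (lam : R) (r : nat) (S : nat -> nat -> R) :=
  forall (n : nat) (x : R), dfact lam (x + r%:R) n = \sum_(k < n.+1) S n k * ffact x k.

Definition dBell (S : nat -> nat -> R) (n : nat) (x : R) : R :=
  \sum_(k < n.+1) S n k * x ^+ k.

(* truncation at degree N of e_lambda^x(t) = sum_k (x)_{k,lambda} t^k / k! *)
Definition dexp_trunc (lam x : R) (N : nat) : {poly R} :=
  \poly_(k < N.+1) (dfact lam x k / (k`!)%:R).

(* coefficient of t^n in the formal power series
     e_lambda^r(t) * exp( y (e_lambda(t) - 1) ),
   where exp(g) = sum_k g^k/k! for g without constant term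
   (only k <= n contribute to t^n, and truncating the factors at degree n
   does not change the coefficient of t^n). *)
Definition rhs_coef (lam : R) (r : nat) (y : R) (n : nat) : R :=
  (dexp_trunc lam r%:R n *
   \sum_(k < n.+1) ((y ^+ k / (k`!)%:R) *: (dexp_trunc lam 1 n - 1) ^+ k)) `_ n.

(* ---- boson operators on coefficient sequences psi = sum_m psi m |m> ---- *)
Definition state := nat -> R[i].

Definition sqrtC' (m : nat) : R[i] := (Num.sqrt (m%:R : R))%:C.

(* a |m> = sqrt m |m-1>, so (a psi)_k = sqrt(k+1) psi_(k+1) *)
Definition ann (psi : state) : state := fun k => sqrtC' k.+1 * psi k.+1.
(* a^dagger |m> = sqrt(m+1) |m+1>, so (a^dag psi)_k = sqrt k psi_(k-1), 0 at k=0 *)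
Definition cre (psi : state) : state :=
  fun k => match k with 0 => 0 | k'.+1 => sqrtC' k * psi k' end.

Definition numop_r (r : nat) (psi : state) : state :=
  fun k => cre (ann psi) k + (r%:R : R)%:C * psi k.

Fixpoint dfact_op (lam : R) (X : state -> state) (n : nat) (psi : state) : state :=
  match n with
  | 0 => psi
  | n'.+1 => dfact_op lam X n' (fun k => X psi k - (n'%:R * lam)%:C * psi k)
  end.

Definition coherent (z : R[i]) : state :=
  fun m => (expR (- (normc z ^+ 2) / 2))%:C * z ^+ m / (Num.sqrt ((m`!)%:R : R))%:C.

Definition braket_partial (phi psi : state) (N : nat) : R[i] :=
  \sum_(m < N) (phi m)^* * psi m.

End Defs.

(* Main.v *)
Require Import Defs.
From HB Require Import structures.
From mathcomp Require Import all_boot all_order all_algebra.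
From mathcomp Require Import complex.
From mathcomp Require Import all_classical all_reals all_analysis.
From mathcomp Require Import ring lra zify.
Import Order.TTheory GRing.Theory Num.Theory ComplexField ComplexField.Normc.
Import numFieldNormedType.Exports.
Local Open Scope ring_scope.
Local Open Scope complex_scope.
Local Open Scope classical_set_scope.

Section Alg.
Variable R : realType.
Variable lam : R.

Lemma dfactS (y : R) m : dfact lam y m.+1 = dfact lam y m * (y - m%:R * lam).
Proof. by rewrite /dfact big_ord_recr. Qed.

Lemma ffactS (y : R) m : ffact y m.+1 = ffact y m * (y - m%:R).
Proof. by rewrite /ffact big_ord_recr. Qed.

Lemma dVander (a b : R) m :
  dfact lam (a + b) m =
  \sum_(i < m.+1) 'C(m, i)%:R * dfact lam a i * dfact lam b (m - i).
Proof.
elim: m => [|m IH].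
  by rewrite big_ord_recr big_ord0 /= /dfact !big_ord0 add0r !mulr1.
rewrite dfactS IH mulr_suml.
have E : forall i : 'I_m.+1,
   'C(m, i)%:R * dfact lam a i * dfact lam b (m - i) * (a + b - m%:R * lam)
   = 'C(m, i)%:R * dfact lam a i.+1 * dfact lam b (m - i)
     + 'C(m, i)%:R * dfact lam a i * dfact lam b (m.+1 - i).
  move=> [i Hi] /=.
  have Hi' : (i <= m)%N by [].
  rewrite (subSn Hi') !dfactS natrB //.
  ring.
rewrite (eq_bigr _ (fun i _ => E i)) big_split /=.
rewrite [RHS]big_ord_recl /= bin0 subn0.
rewrite [in RHS](eq_bigr (fun i : 'I_m.+1 =>
   'C(m, i)%:R * dfact lam a i.+1 * dfact lam b (m - i) +
   'C(m, i.+1)%:R * dfact lam a i.+1 * dfact lam b (m - i))); last first.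
  by move=> i _; rewrite /bump /= add1n subSS binS natrD; ring.
rewrite big_split /= [RHS]addrCA; congr (_ + _).
rewrite big_ord_recl /= bin0 subn0 [in RHS]big_ord_recr /=.
rewrite bin_small // mul0r mul0r addr0; congr (_ + _).
Qed.

Lemma ffact_nat (m k : nat) : ffact (m%:R : R) k = (m ^_ k)%:R.
Proof.
elim: k => [|k IH]; first by rewrite /ffact big_ord0.
rewrite ffactS IH ffactnSr natrM.
case: (leqP k m) => H; first by rewrite natrB.
by rewrite ffact_small // !mul0r.
Qed.

Lemma sum_trunc (g : nat -> R) M K : (K <= M)%N -> (forall k, (K <= k)%N -> g k = 0) ->
  \sum_(k < M) g k = \sum_(k < K) g k.
Proof.
move=> HKM Hg; rewrite (big_ord_widen M g HKM) [RHS]big_mkcond /=.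
by apply: eq_bigr => k _; case: ifP => // /negbT; rewrite -leqNgt => /Hg.
Qed.

Lemma lowcoef (p : {poly R}) k i : p`_0 = 0 -> (i < k)%N -> (p ^+ k)`_i = 0.
Proof.
move=> H0; elim: k i => [|k IH] i //= Hi.
rewrite exprS coefM big_ord_recl H0 mul0r add0r big1 // => j _.
rewrite IH ?mulr0 //= /bump /= add1n subnSK //.
by rewrite -ltnS (leq_ltn_trans (leq_subr _ _)).
Qed.

Variable N : nat.
Local Notation E a := (dexp_trunc lam a N).

Lemma coefE a i : (E a)`_i = if (i < N.+1)%N then dfact lam a i / (i`!)%:R else 0.
Proof. by rewrite coef_poly. Qed.

Definition eqt (p q : {poly R}) := forall i, (i <= N)%N -> p`_i = q`_i.

Lemma eqt_refl p : eqt p p. Proof. by []. Qed.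
Lemma eqt_trans p q s : eqt p q -> eqt q s -> eqt p s.
Proof. by move=> H1 H2 i Hi; rewrite H1 ?H2. Qed.
Arguments eqt_trans {p q s}.

Lemma eqtM p p' q q' : eqt p p' -> eqt q q' -> eqt (p * q) (p' * q').
Proof.
move=> Hp Hq i Hi; rewrite !coefM; apply: eq_bigr => [[j Hj]] _ /=.
rewrite Hp ?Hq //; first exact: leq_trans (leq_subr j i) Hi.
exact: leq_trans Hi.
Qed.
Arguments eqtM {p p' q q'}.

Lemma fact_neq0' k : (k`!)%:R != 0 :> R.
Proof. by rewrite pnatr_eq0 -lt0n fact_gt0. Qed.

Lemma EM a b : eqt (E a * E b) (E (a + b)).
Proof.
move=> i Hi; rewrite coefM coefE ifT // dVander mulr_suml.
apply: eq_bigr => [[j Hj]] _ /=.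
have Hji : (j <= i)%N by [].
rewrite !coefE !ifT; last 2 first.
- by rewrite ltnS (leq_trans (leq_subr _ _) Hi).
- by rewrite ltnS (leq_trans Hji Hi).
have := bin_fact Hji => /(congr1 (fun n => n%:R : R)); rewrite !natrM => <-.
have h1 := fact_neq0' j; have h2 := fact_neq0' (i - j).
have h3 : 'C(i, j)%:R != 0 :> R by rewrite pnatr_eq0 -lt0n bin_gt0.
field.
by rewrite h1 h2 h3.
Qed.

Lemma EMpow a m : eqt (E a * E 1 ^+ m) (E (a + m%:R)).
Proof.
elim: m => [|m IH]; first by rewrite expr0 mulr1 addr0.
rewrite exprSr mulrA; apply: (eqt_trans (eqtM IH (eqt_refl (E 1)))).
by rewrite -natr1 addrA; apply: EM.
Qed.

Lemma uniq_ff (d : nat -> R) :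
  (forall m : nat, \sum_(k < N.+1) d k * ffact (m%:R : R) k = 0) ->
  forall k, (k <= N)%N -> d k = 0.
Proof.
move=> H k; elim/ltn_ind: k => k IH Hk.
have Hk' : (k < N.+1)%N by [].
have := H k; rewrite (bigD1 (Ordinal Hk')) //= big1 ?addr0.
  move/eqP; rewrite ffact_nat ffactnn mulf_eq0 (negbTE (fact_neq0' k)) orbF.
  by move/eqP.
move=> [j Hj] /= Hne; case: (ltngtP j k) => [lt|gt|eq].
- by rewrite IH ?mul0r // -ltnS.
- by rewrite ffact_nat ffact_small // mulr0.
- by move: Hne; rewrite -val_eqE /= eq eqxx.
Qed.

Lemma binomE1 m : E 1 ^+ m = \sum_(k < m.+1) 'C(m, k)%:R *: (E 1 - 1) ^+ k.
Proof.
rewrite -{1}(subrK 1 (E 1)) addrC exprDn.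
by apply: eq_bigr => k _; rewrite expr1n mul1r scaler_nat.
Qed.

Lemma E1_0 : (E 1 - 1)`_0 = 0.
Proof. by rewrite coefB coefE coef1 /= /dfact big_ord0 divr1 subrr. Qed.

Lemma trunc_binom m : eqt (\sum_(k < N.+1) 'C(m, k)%:R *: (E 1 - 1) ^+ k) (E 1 ^+ m).
Proof.
move=> i Hi; rewrite binomE1 !coef_sum.
have Hz : forall k, ((minn i m).+1 <= k)%N -> ('C(m, k)%:R *: (E 1 - 1) ^+ k)`_i = 0.
  move=> k Hk; rewrite coefZ.
  case: (leqP k i) => Hki.
    by rewrite bin_small ?mul0r //; lia.
  by rewrite lowcoef ?mulr0 // E1_0.
pose g := fun k => ('C(m, k)%:R *: (E 1 - 1) ^+ k)`_i.
rewrite (@sum_trunc g N.+1 (minn i m).+1) ?(@sum_trunc g m.+1 (minn i m).+1) //; lia.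
Qed.

Lemma part2 (r : nat) (S : nat -> nat -> R) (HS : is_deg_r_Stirling2 lam r S) (x : R) :
  dBell S N x = (N`!)%:R * rhs_coef lam r x N.
Proof.
set c := fun k => (E r%:R * (E 1 - 1) ^+ k)`_N.
have step1 : rhs_coef lam r x N = \sum_(k < N.+1) x ^+ k / (k`!)%:R * c k.
  rewrite /rhs_coef mulr_sumr coef_sum; apply: eq_bigr => k _.
  by rewrite -scalerAr coefZ.
have key : forall m : nat, \sum_(k < N.+1) 'C(m, k)%:R * c k = dfact lam (m%:R + r%:R) N / (N`!)%:R.
  move=> m.
  have -> : \sum_(k < N.+1) 'C(m, k)%:R * c k =
     (E r%:R * \sum_(k < N.+1) 'C(m, k)%:R *: (E 1 - 1) ^+ k)`_N.
    rewrite mulr_sumr coef_sum; apply: eq_bigr => k _.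
    by rewrite -scalerAr coefZ.
  rewrite (eqtM (eqt_refl (E r%:R)) (trunc_binom m)) //.
  by rewrite EMpow // coefE ltnSn addrC.
have step2 : forall k, (k <= N)%N -> S N k = (N`!)%:R * c k / (k`!)%:R.
  move=> k Hk; apply/eqP; rewrite -subr_eq0; apply/eqP.
  apply: (@uniq_ff (fun k => S N k - (N`!)%:R * c k / (k`!)%:R) _ k Hk) => m.
  rewrite (eq_bigr (fun k : 'I_N.+1 => S N k * ffact (m%:R : R) k
                      - (N`!)%:R * ('C(m, k)%:R * c k))); last first.
    move=> k' _; rewrite mulrBl ffact_nat -bin_ffact natrM.
    have := fact_neq0' k'; move=> h; field; exact: h.
  rewrite sumrB -mulr_sumr key -HS.
  have := fact_neq0' N => h; field; exact: h.
rewrite /dBell step1 mulr_sumr; apply: eq_bigr => k _.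
rewrite (step2 k (ltn_ord k)).
have := fact_neq0' k => h; field; exact: h.
Qed.

End Alg.

Section Quant.
Variable R : realType.
Variables (lam : R) (r : nat).

Lemma expR_cvg (x : R) : series (exp_coeff x) @ \oo --> expR x.
Proof. exact: is_cvg_series_exp_coeff. Qed.

Lemma toC_cvg (u : nat -> R) (l : R) : u @ \oo --> l ->
  ((fun N => (u N)%:C) : nat -> R[i]^o) @ \oo --> (l%:C : R[i]^o).
Proof.
move=> Hu; apply/cvgrPdist_lt => e e0.
have : (0 : R[i]) < e by [].
rewrite ltcE => /andP [/eqP He e0'].
move/cvgrPdist_lt: Hu => /(_ (complex.Re e) e0').
apply: filterS => N HN.
rewrite -rmorphB.
have -> : `|(l - u N)%:C| = `|l - u N|%:C :> R[i].
  by rewrite normc_def /= expr0n addr0 sqrtr_sqr.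
by rewrite ltcE /= He eqxx HN.
Qed.


Lemma sqrtC'_sq m : sqrtC' R m * sqrtC' R m = (m%:R : R)%:C.
Proof. by rewrite /sqrtC' -rmorphM -expr2 sqr_sqrtr // ler0n. Qed.

Lemma numop_diag (psi : state R) k : numop_r r psi k = ((k + r)%:R : R)%:C * psi k.
Proof.
rewrite /numop_r /cre /ann; case: k => [|k].
  by rewrite add0r add0n.
by rewrite mulrA sqrtC'_sq natrD rmorphD mulrDl.
Qed.

Lemma dfact_op_diag n (psi : state R) k :
  dfact_op lam (numop_r r) n psi k = (dfact lam (k + r)%:R n)%:C * psi k.
Proof.
elim: n psi => [|n IH] psi /=.
  by rewrite /dfact big_ord0 mul1r.
rewrite IH numop_diag dfactS !rmorphM rmorphB rmorphM /=.
ring.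
Qed.

Lemma normcC (z : R[i]) : `|z| = (normc z)%:C.
Proof. by case: z. Qed.

Lemma normC_real (a : R) : `|a%:C| = `|a|%:C.
Proof. by rewrite normc_def /= expr0n addr0 sqrtr_sqr. Qed.

Lemma coh_term (z : R[i]) m (D : R) :
  (coherent z m)^* * (D%:C * coherent z m) =
  (D * (expR (- (normc z ^+ 2)) * (normc z ^+ 2) ^+ m / (m`!)%:R))%:C.
Proof.
set w := coherent z m.
have -> : w^* * (D%:C * w) = D%:C * `|w| ^+ 2 by rewrite sqr_normc; ring.
rewrite /w /coherent.
set e := expR _; set s := Num.sqrt _.
rewrite normrM normfV normrM normrX !normC_real normcC.
rewrite (ger0_norm (expR_ge0 _)) (ger0_norm (sqrtr_ge0 _)).
have ee : e * e = expR (- (normc z ^+ 2)).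
  by rewrite /e -expRD; congr expR; field.
have ss : s * s = (m`!)%:R.
  by rewrite /s -expr2 sqr_sqrtr // ler0n.
have key : D * (e * normc z ^+ m / s) ^+ 2 =
   D * (expR (- (normc z ^+ 2)) * (normc z ^+ 2) ^+ m / (m`!)%:R).
  rewrite -ee -ss -exprM mulnC exprM invfM; ring.
rewrite -key !(rmorphM, rmorphXn, fmorphV).
by [].
Qed.

Lemma inner k (x : R) M :
  \sum_(m < M) ffact (m%:R : R) k * (x ^+ m / (m`!)%:R) = x ^+ k * series (exp_coeff x) (M - k)%N.
Proof.
elim: M => [|M IH].
  by rewrite big_ord0 sub0n /series /= big_geq // mulr0.
rewrite big_ord_recr /= IH ffact_nat.
case: (leqP k M) => H.
  rewrite (subSn H) /series /= big_nat_recr //= mulrDr; congr (_ + _).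
  rewrite /exp_coeff /=.
  have F := ffact_fact H.
  have -> : (M ^_ k)%:R = (M`!)%:R / ((M - k)`!)%:R :> R.
    by rewrite -F natrM mulfK // fact_neq0'.
  have -> : x ^+ M = x ^+ k * x ^+ (M - k)%N by rewrite -exprD subnKC.
  have h1 := fact_neq0' R M; have h2 := fact_neq0' R (M - k).
  field; by rewrite h1 h2.
have -> : (M.+1 - k = M - k)%N by lia.
by rewrite ffact_small // mul0r addr0.
Qed.

Lemma sum_cvg K (f : nat -> nat -> R) (l : nat -> R) :
  (forall k, f k @ \oo --> l k) ->
  (fun N => \sum_(k < K) f k N) @ \oo --> \sum_(k < K) l k.
Proof.
move=> Hf; elim: K => [|K IH].
  rewrite big_ord0; under eq_fun do rewrite big_ord0; exact: cvg_cst.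
rewrite big_ord_recr /=; under eq_fun do rewrite big_ord_recr /=.
exact: cvgD.
Qed.

End Quant.


Theorem theorem8 (R : realType) (lam : R) (r : nat) (z : R[i])
  (S : nat -> nat -> R) (HS : is_deg_r_Stirling2 lam r S) (n : nat) :
  ((braket_partial (coherent z) (dfact_op lam (numop_r r) n (coherent z)) : nat -> R[i]^o) @ \oo
     --> ((dBell S n (normc z ^+ 2))%:C : R[i]^o))
  /\ dBell S n (normc z ^+ 2) = (n`!)%:R * rhs_coef lam r (normc z ^+ 2) n.
Proof.
split; last exact: part2.
set x := normc z ^+ 2.
pose f := fun k N => S n k * (expR (- x) * (x ^+ k * series (exp_coeff x) (N - k)%N)).
have Er : forall N, \sum_(m < N) dfact lam (m + r)%:R n * (expR (- x) * x ^+ m / (m`!)%:R)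
    = \sum_(k < n.+1) f k N.
  move=> N.
  under eq_bigr => m _ do rewrite natrD HS mulr_suml.
  rewrite exchange_big /=; apply: eq_bigr => k _.
  rewrite /f -inner mulr_sumr mulr_sumr; apply: eq_bigr => m _.
  ring.
have Eb : braket_partial (coherent z) (dfact_op lam (numop_r r) n (coherent z))
    = fun N => (\sum_(k < n.+1) f k N)%:C.
  apply/funext => N; rewrite /braket_partial.
  rewrite (eq_bigr (fun m : 'I_N => (dfact lam (m + r)%:R n * (expR (- x) * x ^+ m / (m`!)%:R))%:C)); last first.
    by move=> m _; rewrite dfact_op_diag coh_term.
  by rewrite -rmorph_sum Er.
rewrite Eb; apply: toC_cvg.
have -> : dBell S n x = \sum_(k < n.+1) S n k * (expR (- x) * (x ^+ k * expR x)).
  rewrite /dBell; apply: eq_bigr => k _.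
  have := expRxMexpNx_1 x => h.
  by rewrite -[LHS]mulr1 -h; ring.
apply: (@sum_cvg R n.+1 f (fun k => S n k * (expR (- x) * (x ^+ k * expR x)))) => k; rewrite /f.
apply: cvgMl_tmp; apply: cvgMl_tmp; apply: cvgMl_tmp.
by have := expR_cvg R x; rewrite -(cvg_centern k).
Qed.
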